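(* There exists a function $f:\mathbb{N}\times\mathbb{N}\to\mathbb{N}$ such that for every $m\in\mathbb{N}$, every $x\in\mathbb{R}^m$ with $|\mathrm{set}(x)|\le r$, and every $\ell\in\mathbb{N}$, there exists $y\in\mathbb{R}^{f(r,\ell)}$ with $D_{(y,\ell)}=D_{(x,\ell)}$ and $\mathrm{set}(x)=\mathrm{set}(y)$, and in particular $d_{dF}(x,q)=d_{dF}(y,q)$ for every $q\in\mathbb{R}^\ell$.
   Context: A time series of complexity $m$ is a vector in $\mathbb{R}^m$; $\mathrm{set}(x)$ is the set of entries of $x$, and $\mathrm{rank}_x(z)$ is the rank of $z\in\mathrm{set}(x)$ in $\mathrm{set}(x)$ (ordered increasingly). For $x\in\mathbb{R}^m$ and $y\in\mathbb{R}^\ell$, a traversal is a sequence of index pairs $(i,j)\in[m]\times[\ell]$ starting at $(1,1)$, ending at $(m,\ell)$, in which each pair $(i,j)$ is followed by one of $(i,j+1)$, $(i+1,j)$, $(i+1,j+1)$; $x_i$ and $y_j$ are matched if $(i,j)$ occurs in it. The discrete Fréchet distance $d_{dF}(x,y)$ is the minimum over all traversals $T$ of $\max_{(i,j)\in T}|x_i-y_j|$. For a traversal $M$ of $x$ with a time series of complexity $\ell$, the traversal sectors are $S^{(x,M)}_j=\{x_i: x_i \text{ matched with the } j\text{-th vertex by } M\}$, $j\in[\ell]$, and the $\ell$-profile of $(x,M)$ is $\big((\mathrm{rank}_x(\min S^{(x,M)}_j),\mathrm{rank}_x(\max S^{(x,M)}_j))\big)_{j=1}^{\ell}$. $D_{(x,\ell)}$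 is the set of all $\ell$-profiles of $(x,M)$ over all such traversals $M$. *)

(* Defs.v *)
From HB Require Import structures.
From Stdlib Require Import Rdefinitions.
From mathcomp Require Import all_boot all_order all_algebra.
From mathcomp Require Import Rstruct.
Set Implicit Arguments. Unset Strict Implicit. Unset Printing Implicit Defensive.
Import Order.TTheory GRing.Theory Num.Theory.
Local Open Scope ring_scope.

(* Indices are 0-based: index i in the paper is i.-1 here. A time series of
   complexity m is an m.-tuple R; x_i is nth 0 x i. *)

Definition tset (x : seq R) : seq R := undup x.

(* rank_x(z): rank of z in set(x) ordered increasingly (1-based):
   the number of elements of set(x) that are <= z. *)
Definition rank (x : seq R) (z : R) : nat := count (fun w => w <= z) (tset x).

Definition trav_step (p p' : nat * nat) : bool :=
  [|| p' == (p.1, p.2.+1), p' == (p.1.+1, p.2) | p' == (p.1.+1, p.2.+1)].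

Definition traversal (m l : nat) (M : seq (nat * nat)) : Prop :=
  exists T : seq (nat * nat),
    M = (0%N, 0%N) :: T /\ path trav_step (0%N, 0%N) T /\
    last (0%N, 0%N) T = (m.-1, l.-1).

Definition xval (x : seq R) (i : nat) : R := nth 0 x i.

Definition sector (x : seq R) (M : seq (nat * nat)) (j : nat) : seq R :=
  [seq xval x p.1 | p <- M & p.2 == j].

Definition smin (s : seq R) : R := foldr Num.min (head 0 s) s.
Definition smax (s : seq R) : R := foldr Num.max (head 0 s) s.

Definition profile (x : seq R) (l : nat) (M : seq (nat * nat)) : seq (nat * nat) :=
  [seq (rank x (smin (sector x M j)), rank x (smax (sector x M j))) | j <- iota 0 l].

Definition profiles (x : seq R) (l : nat) : seq (nat * nat) -> Prop :=
  fun P => exists M, traversal (size x) l M /\ P = profile x l M.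

Definition trav_cost (x y : seq R) (M : seq (nat * nat)) : R :=
  foldr Num.max 0 [seq `|xval x p.1 - xval y p.2| | p <- M].

Definition is_dF (x y : seq R) (d : R) : Prop :=
  (exists M, traversal (size x) (size y) M /\ trav_cost x y M = d) /\
  (forall M, traversal (size x) (size y) M -> d <= trav_cost x y M).

(* Main.v *)
Require Import Defs.
From Stdlib Require Import Rdefinitions.
From mathcomp Require Import all_boot all_order all_algebra.
From mathcomp Require Import Rstruct.
From mathcomp Require Import lra.
From Stdlib Require Import Classical ClassicalEpsilon.
Import Order.TTheory GRing.Theory Num.Theory.
Set Implicit Arguments. Unset Strict Implicit.

Section Part1.
Local Open Scope ring_scope.

Section MinMax.
Context {disp : Order.disp_t} {T : orderType disp}.

Lemma fmin_mem (a : T) s : foldr Order.min a s \in a :: s.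
Proof.
elim: s => [|b s IH] /=; first by rewrite inE.
case: leP => _; first by rewrite !inE eqxx orbT.
by move: IH; rewrite !inE => /orP[->|->]; rewrite ?orbT.
Qed.

Lemma fmin_le (a : T) s z : z \in a :: s -> (foldr Order.min a s <= z)%O.
Proof.
elim: s z => [|b s IH] z /=; first by rewrite inE => /eqP->.
rewrite !inE ge_min => /or3P[/eqP->|/eqP->|zs].
- by rewrite IH ?orbT // inE eqxx.
- by rewrite lexx.
- by rewrite IH ?orbT // inE zs orbT.
Qed.

Lemma fmax_mem (a : T) s : foldr Order.max a s \in a :: s.
Proof.
elim: s => [|b s IH] /=; first by rewrite inE.
case: leP => _; last by rewrite !inE eqxx orbT.
by move: IH; rewrite !inE => /orP[->|->]; rewrite ?orbT.
Qed.

Lemma fmax_ge (a : T) s z : z \in a :: s -> (z <= foldr Order.max a s)%O.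
Proof.
elim: s z => [|b s IH] z /=; first by rewrite inE => /eqP->.
rewrite !inE le_max => /or3P[/eqP->|/eqP->|zs].
- by rewrite IH ?orbT // inE eqxx.
- by rewrite lexx.
- by rewrite IH ?orbT // inE zs orbT.
Qed.

Definition gmin (d : T) (s : seq T) := foldr Order.min (head d s) s.
Definition gmax (d : T) (s : seq T) := foldr Order.max (head d s) s.

Lemma gmin_mem d s : s != [::] -> gmin d s \in s.
Proof.
case: s => [//|a s] _; rewrite /gmin /=.
have := fmin_mem a (a :: s); rewrite /= inE => /orP[/eqP->|//].
by rewrite inE eqxx.
Qed.

Lemma gmin_le d s z : z \in s -> (gmin d s <= z)%O.
Proof. by case: s => [//|a s] zs; rewrite /gmin; apply: (@fmin_le a); rewrite inE zs orbT. Qed.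

Lemma gmax_mem d s : s != [::] -> gmax d s \in s.
Proof.
case: s => [//|a s] _; rewrite /gmax /=.
have := fmax_mem a (a :: s); rewrite /= inE => /orP[/eqP->|//].
by rewrite inE eqxx.
Qed.

Lemma gmax_ge d s z : z \in s -> (z <= gmax d s)%O.
Proof. by case: s => [//|a s] zs; rewrite /gmax; apply: (@fmax_ge a); rewrite inE zs orbT. Qed.

Lemma gmin_eq d d' s s' : s != [::] -> s =i s' -> gmin d s = gmin d' s'.
Proof.
move=> ne e; have ne' : s' != [::].
  by move: ne; case: s e => // a s e _; apply/eqP => E; move: (e a); rewrite E inE eqxx.
apply: le_anti; rewrite gmin_le ?gmin_le //= -?e ?gmin_mem //.
by rewrite e gmin_mem.
Qed.

Lemma gmax_eq d d' s s' : s != [::] -> s =i s' -> gmax d s = gmax d' s'.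
Proof.
move=> ne e; have ne' : s' != [::].
  by move: ne; case: s e => // a s e _; apply/eqP => E; move: (e a); rewrite E inE eqxx.
apply: le_anti; rewrite gmax_ge ?gmax_ge //= -?e ?gmax_mem //.
by rewrite e gmax_mem.
Qed.
End MinMax.

Lemma smin_gmin s : smin s = gmin 0 s. Proof. by []. Qed.
Lemma smax_gmax s : smax s = gmax 0 s. Proof. by []. Qed.

Lemma mono_gmin {d1 d2} {T1 : orderType d1} {T2 : orderType d2} (f : T1 -> T2)
  (a : T1) (b : T2) s : {homo f : u v / (u <= v)%O} -> s != [::] ->
  f (gmin a s) = gmin b (map f s).
Proof.
move=> mf ne; have ne' : map f s != [::] by case: s ne.
apply: le_anti; rewrite gmin_le ?map_f ?gmin_mem // andbT.
have /mapP[z zs ->] := gmin_mem b ne'.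
by apply: mf; apply: gmin_le.
Qed.

Lemma mono_gmax {d1 d2} {T1 : orderType d1} {T2 : orderType d2} (f : T1 -> T2)
  (a : T1) (b : T2) s : {homo f : u v / (u <= v)%O} -> s != [::] ->
  f (gmax a s) = gmax b (map f s).
Proof.
move=> mf ne; have ne' : map f s != [::] by case: s ne.
apply: le_anti; rewrite gmax_ge ?map_f ?gmax_mem //=.
have /mapP[z zs ->] := gmax_mem b ne'.
by apply: mf; apply: gmax_ge.
Qed.

End Part1.

Section Part2.

Lemma step_le p p' : trav_step p p' ->
  [/\ p.1 <= p'.1, p.2 <= p'.2, p'.1 <= p.1.+1 & p'.2 <= p.2.+1]%N.
Proof.
case: p p' => a b [c d]; rewrite /trav_step /= !xpair_eqE.
by case/or3P => /andP[/eqP-> /eqP->]; rewrite !leqnn ?leqnSn.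
Qed.

Lemma path_mono x0 T : path trav_step x0 T -> forall p, p \in x0 :: T ->
  (p.1 <= (last x0 T).1)%N /\ (p.2 <= (last x0 T).2)%N.
Proof.
elim: T x0 => [|y T IH] x0 /=; first by move=> _ p; rewrite inE => /eqP->.
move=> /andP[st pt] p; rewrite inE => /orP[/eqP->|pin]; last exact: IH.
have [h1 h2 _ _] := step_le st.
have [k1 k2] := IH y pt y (mem_head _ _).
by split; [apply: leq_trans k1|apply: leq_trans k2].
Qed.

Lemma path_cover x0 T : path trav_step x0 T -> forall j,
  (x0.2 <= j <= (last x0 T).2)%N -> exists i, (i, j) \in x0 :: T.
Proof.
elim: T x0 => [|y T IH] x0 /=.
  move=> _ j; rewrite -eqn_leq => /eqP <-; exists x0.1.
  by rewrite inE -surjective_pairing.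
move=> /andP[st pt] j /andP[h1 h2].
case: (eqVneq j x0.2) => [->|ne].
  by exists x0.1; rewrite inE -surjective_pairing eqxx.
have [_ _ _ k] := step_le st.
have [i iin] : exists i, (i, j) \in y :: T.
  apply: IH => //; rewrite h2 andbT; apply: leq_trans k _.
  by rewrite ltn_neqAle eq_sym ne.
by exists i; rewrite inE iin orbT.
Qed.

Lemma trav_range m l M : traversal m l M -> (0 < m)%N -> (0 < l)%N ->
  forall p, p \in M -> (p.1 < m)%N /\ (p.2 < l)%N.
Proof.
move=> [T [-> [pt lt]]] m0 l0 p pin.
have [h1 h2] := path_mono pt pin; rewrite lt /= in h1 h2.
by split; [rewrite -(prednK m0) ltnS|rewrite -(prednK l0) ltnS].
Qed.

Lemma trav_cover m l M : traversal m l M -> forall j, (j < l)%N ->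
  exists i, (i, j) \in M.
Proof.
move=> [T [-> [pt lt]]] j jl; apply: path_cover => //=.
by rewrite lt /= -ltnS (leq_trans jl) // leqSpred.
Qed.

Definition wstep (p p' : nat * nat) : bool := (p' == p) || trav_step p p'.

Lemma compress x0 T : path wstep x0 T -> exists T2,
  [/\ path trav_step x0 T2, last x0 T2 = last x0 T & x0 :: T2 =i x0 :: T].
Proof.
elim: T x0 => [|y T IH] x0 /=; first by move=> _; exists [::].
move=> /andP[/orP[/eqP E|st] pt]; have [T3 [p3 l3 m3]] := IH y pt.
  subst y; exists T3; split => // z; move: (m3 z); rewrite !inE => ->.
  by case: (z == x0).
exists (y :: T3); split => /=; first by rewrite st.
  by [].
by move=> z; move: (m3 z); rewrite !inE => ->.
Qed.

Lemma wtrav m l T : path wstep (0%N, 0%N) T -> last (0%N, 0%N) T = (m.-1, l.-1) ->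
  exists M2, traversal m l M2 /\ M2 =i (0%N, 0%N) :: T.
Proof.
move=> pt lt; have [T2 [p2 l2 m2]] := compress pt.
by exists ((0%N,0%N) :: T2); split => //; exists T2; split => //; rewrite l2.
Qed.

Definition nsec (w : seq nat) (M : seq (nat * nat)) (j : nat) : seq nat :=
  [seq nth 0%N w p.1 | p <- M & p.2 == j].
Definition nprof (w : seq nat) (l : nat) (M : seq (nat * nat)) : seq (nat * nat) :=
  [seq (gmin 0%N (nsec w M j), gmax 0%N (nsec w M j)) | j <- iota 0 l].
Definition npset (w : seq nat) (l : nat) (P : seq (nat * nat)) : Prop :=
  exists M, traversal (size w) l M /\ P = nprof w l M.

Lemma nprof_eq w1 w2 l M1 M2 :
  (forall j, (j < l)%N -> nsec w1 M1 j != [::] /\ nsec w1 M1 j =i nsec w2 M2 j) ->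
  nprof w1 l M1 = nprof w2 l M2.
Proof.
move=> H; apply/eq_in_map => j; rewrite mem_iota add0n => /= jl.
have [ne e] := H j jl.
by rewrite (gmin_eq 0%N 0%N ne e) (gmax_eq 0%N 0%N ne e).
Qed.

Lemma nsec_ne w l M j : traversal (size w) l M -> (j < l)%N -> nsec w M j != [::].
Proof.
move=> tr jl; have [i iin] := trav_cover tr jl.
apply/eqP => E; have : nth 0%N w i \in nsec w M j.
  by apply/mapP; exists (i, j) => //; rewrite mem_filter eqxx.
by rewrite E.
Qed.

Lemma nsec_mem w M1 M2 j : M1 =i M2 -> nsec w M1 j =i nsec w M2 j.
Proof.
move=> e; apply: eq_mem_map => p; by rewrite !mem_filter e.
Qed.

End Part2.

Section Part3.

Lemma nsecP w M j z :
  reflect (exists2 p, p \in M & (p.2 == j) && (z == nth 0%N w p.1)) (z \in nsec w M j).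
Proof.
apply: (iffP mapP) => [[p]|[p pin /andP[pj /eqP ->]]].
  by rewrite mem_filter => /andP[pj pin] ->; exists p => //; rewrite pj eqxx.
by exists p => //; rewrite mem_filter pj.
Qed.

Definition sh (p : nat * nat) := (p.1.+1, p.2).
Definition ush (p : nat * nat) := (p.1.-1, p.2).

Lemma step_sh p p' : trav_step (sh p) (sh p') = trav_step p p'.
Proof. by case: p p' => a b [c d]; rewrite /trav_step /sh /= !xpair_eqE !eqSS. Qed.

Lemma path_sh x T : path trav_step x T -> path trav_step (sh x) (map sh T).
Proof. by elim: T x => [|y T IH] x //= /andP[s p]; rewrite step_sh s IH. Qed.

Lemma step_ush p p' : trav_step p p' -> wstep (ush p) (ush p').
Proof.
case: p p' => a b [c d]; rewrite /trav_step /wstep /ush /= !xpair_eqE.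
case/or3P => /andP[/eqP-> /eqP->]; case: a => [|a] /=;
  by rewrite /trav_step /= !xpair_eqE !eqxx /= ?orbT.
Qed.

Lemma path_ush x T : path trav_step x T -> path wstep (ush x) (map ush T).
Proof. by elim: T x => [|y T IH] x //= /andP[s p]; rewrite step_ush ?IH. Qed.

Lemma npset_dup w l P : (0 < size w)%N -> (0 < l)%N ->
  npset (head 0%N w :: w) l P <-> npset w l P.
Proof.
move=> w0 l0; set v := head 0%N w.
have nthE i : nth 0%N (v :: w) i = nth 0%N w i.-1.
  by case: i => [|i] //=; rewrite /v; case: (w) w0.
split.
- move=> [M' [tr' ->]]; case: (tr') => [T' [EM' [pt' lt']]].
  have pt := path_ush pt'.
  have lt : last (ush (0%N, 0%N)) (map ush T') = ((size w).-1, l.-1).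
    by rewrite last_map lt'.
  have [M2 [tr2 m2]] := @wtrav (size w) l (map ush T') pt lt.
  exists M2; split => //; apply: nprof_eq => j jl.
  split; first exact: nsec_ne tr' jl.
  have EE : (0%N,0%N) :: map ush T' = map ush M' by rewrite EM'.
  move=> z; rewrite (nsec_mem _ _ m2) EE; apply/nsecP/nsecP => [[p pin /andP[pj /eqP ->]]|[p]].
    exists (ush p); first by rewrite map_f.
    by rewrite /ush /=; rewrite pj nthE eqxx.
  move=> /mapP[q qin ->] /andP[qj /eqP ->].
  by exists q => //; rewrite /ush /=; rewrite qj nthE eqxx.
- move=> [M [tr ->]]; case: (tr) => [T [EM [pt lt]]].
  exists ((0%N, 0%N) :: map sh M); split.
    exists (map sh M); split => //; split.
      by rewrite EM /= path_sh ?andbT //.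
    rewrite EM /= last_map lt /sh /= prednK //.
  apply: nprof_eq => j jl.
  split; first exact: nsec_ne tr jl.
  move=> z; apply/nsecP/nsecP => [[p pin /andP[pj /eqP ->]]|[p]].
    exists (sh p); first by rewrite inE map_f ?orbT.
    by rewrite /sh /=; rewrite pj eqxx.
  rewrite inE => /orP[/eqP->|/mapP[q qin ->]] /andP[qj /eqP ->].
    exists (0%N, 0%N); first by rewrite EM inE eqxx.
    by move: qj => /= /eqP <-; rewrite -(nthE 0%N) /= !eqxx.
  by exists q => //; move: qj; rewrite /sh /= => ->; rewrite eqxx.
Qed.

End Part3.

Section Part4.
Local Open Scope ring_scope.

Lemma rank_mono (x : seq R) : {homo rank x : u v / (u <= v)%O >-> (u <= v)%O}.
Proof.
move=> a b ab; rewrite /rank; apply: sub_count => z /= za.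
exact: le_trans za ab.
Qed.

Lemma sector_code (x : seq R) l M j : traversal (size x) l M ->
  (0 < size x)%N -> (0 < l)%N ->
  map (rank x) (sector x M j) = nsec (map (rank x) x) M j.
Proof.
move=> tr x0 l0; rewrite /sector /nsec -map_comp; apply/eq_in_map => p.
rewrite mem_filter => /andP[_ pin]; have [h _] := trav_range tr x0 l0 pin.
by rewrite /= (nth_map 0) // /xval.
Qed.

Lemma profile_code (x : seq R) l M : traversal (size x) l M ->
  (0 < size x)%N -> (0 < l)%N -> profile x l M = nprof (map (rank x) x) l M.
Proof.
move=> tr x0 l0; apply/eq_in_map => j; rewrite mem_iota add0n /= => jl.
have tr' : traversal (size (map (rank x) x)) l M by rewrite size_map.
have ne := nsec_ne tr' jl.
rewrite -(sector_code j tr x0 l0) in ne *.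
have ne' : sector x M j != [::] by move: ne; case: (sector x M j).
by rewrite smin_gmin smax_gmax (mono_gmin 0 0%N (@rank_mono x) ne')
  (mono_gmax 0 0%N (@rank_mono x) ne').
Qed.

Lemma profiles_code (x : seq R) l P : (0 < size x)%N -> (0 < l)%N ->
  profiles x l P <-> npset (map (rank x) x) l P.
Proof.
move=> x0 l0; rewrite /profiles /npset size_map; split => -[M [tr ->]];
  by exists M; split => //; rewrite profile_code.
Qed.

Definition sortt (x : seq R) := sort <=%O (tset x).

Lemma sortt_lt x : sorted <%O (sortt x).
Proof. by rewrite /sortt sort_lt_sorted /tset undup_uniq. Qed.

Lemma rank_nth x i : (i < size (sortt x))%N -> rank x (nth 0 (sortt x) i) = i.+1.
Proof.
move=> il; set s := sortt x; set z := nth 0 s i.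
have -> : rank x z = count (fun w => w <= z) s.
  by rewrite /rank; apply/permP; rewrite perm_sym /s /sortt perm_sort.
have hlt := sorted_ltn_nth lt_trans 0 (sortt_lt x).
rewrite -(cat_take_drop i.+1 s) count_cat.
have -> : count (fun w => w <= z) (take i.+1 s) = i.+1.
  have sz : size (take i.+1 s) = i.+1 by rewrite size_takel.
  apply/eqP; rewrite -{2}sz -all_count; apply/(all_nthP 0) => k; rewrite sz => ki.
  rewrite nth_take //; move: ki; rewrite ltnS leq_eqVlt => /orP[/eqP->//|ki].
  by apply: ltW; apply: hlt; rewrite // inE (ltn_trans ki).
suff -> : count (fun w => w <= z) (drop i.+1 s) = 0%N by rewrite addn0.
apply/eqP; rewrite -leqn0 leqNgt -has_count; apply/(has_nthP 0) => -[k].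
rewrite size_drop ltn_subRL => ks; rewrite nth_drop.
rewrite lt_geF //; apply: hlt; rewrite ?inE //.
by rewrite addSn ltnS leq_addr.
Qed.

Lemma mem_sortt x z : (z \in sortt x) = (z \in tset x).
Proof. by rewrite /sortt mem_sort. Qed.

Lemma rank_index x z : z \in tset x -> rank x z = (index z (sortt x)).+1.
Proof.
rewrite -mem_sortt => zin.
by rewrite -{1}(nth_index 0 zin) rank_nth // index_mem.
Qed.

Lemma rank_inj x a b : a \in tset x -> b \in tset x -> rank x a = rank x b -> a = b.
Proof.
move=> ain bin; rewrite !rank_index // => -[E].
rewrite -mem_sortt in ain; rewrite -mem_sortt in bin.
by rewrite -(nth_index 0 ain) -(nth_index 0 bin) E.
Qed.

Lemma rank_bound x z : z \in tset x -> (0 < rank x z <= size (tset x))%N.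
Proof.
move=> zin; rewrite rank_index //= -(size_sort <=%O) -/(sortt x) index_mem.
by rewrite mem_sortt.
Qed.

Lemma rank_inv x z : z \in tset x -> nth 0 (sortt x) (rank x z).-1 = z.
Proof. by move=> zin; rewrite rank_index //= nth_index // mem_sortt. Qed.

Lemma rank_eq x y : tset x =i tset y -> rank x =1 rank y.
Proof.
move=> e z; rewrite /rank; apply/permP; apply: uniq_perm => //;
  by rewrite /tset undup_uniq.
Qed.

End Part4.

Section Part5.
Local Open Scope ring_scope.

Lemma foldr_max0_le (s : seq R) b :
  (foldr Num.max 0 s <= b) = (0 <= b) && all (fun z => z <= b) s.
Proof.
elim: s => [|a s IH] /=; first by rewrite andbT.
by rewrite ge_max IH andbCA.
Qed.

Lemma sector_mem (x : seq R) M j z :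
  reflect (exists2 p, p \in M & (p.2 == j) && (z == xval x p.1)) (z \in sector x M j).
Proof.
apply: (iffP mapP) => [[p]|[p pin /andP[pj /eqP ->]]].
  by rewrite mem_filter => /andP[pj pin] ->; exists p => //; rewrite pj eqxx.
by exists p => //; rewrite mem_filter pj.
Qed.

Lemma sector_ne (x : seq R) l M j : traversal (size x) l M -> (j < l)%N ->
  sector x M j != [::].
Proof.
move=> tr jl; have [i iin] := trav_cover tr jl.
apply/eqP => E; have : xval x i \in sector x M j.
  by apply/sector_mem; exists (i, j) => //; rewrite /= !eqxx.
by rewrite E.
Qed.

Lemma sector_tset (x : seq R) l M j z : traversal (size x) l M ->
  (0 < size x)%N -> (0 < l)%N -> z \in sector x M j -> z \in tset x.
Proof.
move=> tr x0 l0 /sector_mem[p pin /andP[_ /eqP ->]].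
have [h _] := trav_range tr x0 l0 pin.
by rewrite /tset mem_undup /xval mem_nth.
Qed.

Lemma cost_le (x q : seq R) l M b : traversal (size x) l M ->
  (0 < size x)%N -> (0 < l)%N -> 0 <= b ->
  (trav_cost x q M <= b) <->
  (forall j, (j < l)%N -> `|smin (sector x M j) - xval q j| <= b /\
                          `|smax (sector x M j) - xval q j| <= b).
Proof.
move=> tr x0 l0 b0; rewrite /trav_cost foldr_max0_le b0 /= all_map; split.
  move=> /allP H j jl; have ne := sector_ne tr jl; split.
    rewrite smin_gmin; have /sector_mem[p pin /andP[/eqP pj /eqP ->]] := gmin_mem 0 ne.
    by have := H p pin; rewrite /= pj.
  rewrite smax_gmax; have /sector_mem[p pin /andP[/eqP pj /eqP ->]] := gmax_mem 0 ne.
  by have := H p pin; rewrite /= pj.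
move=> H; apply/allP => p pin /=.
have [_ h2] := trav_range tr x0 l0 pin.
have [k1 k2] := H _ h2.
have zin : xval x p.1 \in sector x M p.2.
  by apply/sector_mem; exists p => //; rewrite !eqxx.
have m1 := gmin_le 0 zin; have m2 := gmax_ge 0 zin.
rewrite -smin_gmin in m1; rewrite -smax_gmax in m2.
move: k1 k2; rewrite !ler_norml.
set a := smin _; set c := smax _; set z := xval x p.1; set t := xval q p.2.
move: m1 m2; rewrite -/a -/c -/z => m1 m2.
move=> /andP[h1 h1'] /andP[h3 h3']; apply/andP; split; lra.
Qed.

Lemma cost_ge0 (x q : seq R) M : 0 <= trav_cost x q M.
Proof. by have := lexx (trav_cost x q M); rewrite {2}/trav_cost foldr_max0_le => /andP[]. Qed.

Lemma cost_eq (x y q : seq R) l M M' :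
  traversal (size x) l M -> traversal (size y) l M' ->
  (0 < size x)%N -> (0 < size y)%N -> (0 < l)%N ->
  (forall j, (j < l)%N -> smin (sector x M j) = smin (sector y M' j) /\
                         smax (sector x M j) = smax (sector y M' j)) ->
  trav_cost x q M = trav_cost y q M'.
Proof.
move=> tr tr' x0 y0 l0 E.
have H : forall b, 0 <= b -> (trav_cost x q M <= b) <-> (trav_cost y q M' <= b).
  move=> b b0; rewrite (cost_le q tr x0 l0 b0) (cost_le q tr' y0 l0 b0).
  split => H2 j jl; have [e1 e2] := E j jl; [rewrite -e1 -e2 | rewrite e1 e2]; exact: H2.
apply: le_anti; apply/andP; split.
  by apply/(H _ (cost_ge0 _ _ _)).
by apply/(H _ (cost_ge0 _ _ _)).
Qed.

Lemma prof_minmax (x y : seq R) l M M' : tset x =i tset y ->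
  traversal (size x) l M -> traversal (size y) l M' ->
  (0 < size x)%N -> (0 < size y)%N -> (0 < l)%N ->
  profile x l M = profile y l M' ->
  forall j, (j < l)%N -> smin (sector x M j) = smin (sector y M' j) /\
                         smax (sector x M j) = smax (sector y M' j).
Proof.
move=> e tr tr' x0 y0 l0 E j jl.
have := congr1 (fun s => nth (0%N, 0%N) s j) E.
rewrite /profile !(nth_map 0%N) ?size_iota // nth_iota // add0n => -[r1 r2].
have ne := sector_ne tr jl; have ne' := sector_ne tr' jl.
have inx (s : seq R) : s != [::] -> {subset s <= sector x M j} ->
   (gmin 0 s \in tset x) /\ (gmax 0 s \in tset x).
  move=> nes sub; split; apply: (sector_tset tr x0 l0); apply: sub.
    exact: gmin_mem. exact: gmax_mem.
have iny : {subset sector y M' j <= tset x}.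
  by move=> z zin; rewrite e; apply: (sector_tset tr' y0 l0 zin).
rewrite -(rank_eq e (smin (sector y M' j))) in r1.
rewrite -(rank_eq e (smax (sector y M' j))) in r2.
have [a1 a2] := inx _ ne (fun z h => h).
split; apply: (rank_inj (x := x)) => //; apply: iny.
  exact: gmin_mem. exact: gmax_mem.
Qed.

Lemma dF_transfer (x y q : seq R) l d : size q = l ->
  (0 < size x)%N -> (0 < size y)%N -> (0 < l)%N -> tset x =i tset y ->
  (forall P, profiles y l P <-> profiles x l P) -> is_dF x q d -> is_dF y q d.
Proof.
move=> ql x0 y0 l0 e HP [[M [tr cM]] lo]; rewrite /is_dF ql in tr lo *.
split.
  have [M' [tr' E]] : profiles y l (profile x l M) by apply/HP; exists M.
  exists M'; split => //; rewrite -cM; symmetry.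
  apply: (cost_eq q tr tr' x0 y0 l0); apply: prof_minmax => //.
move=> M' tr'.
have [M2 [tr2 E]] : profiles x l (profile y l M') by apply/HP; exists M'.
rewrite (cost_eq q tr' tr2 y0 x0 l0); first exact: lo.
by apply: prof_minmax => // z; rewrite e.
Qed.

End Part5.

Section Part6.
Local Open Scope ring_scope.

Definition asb (P : Prop) : bool := if excluded_middle_informative P then true else false.
Lemma asbP (P : Prop) : asb P <-> P.
Proof. by rewrite /asb; case: excluded_middle_informative. Qed.

Section Fin.
Variables r l : nat.

Local Notation K := ({set (l.-tuple ('I_r.+1 * 'I_r.+1))} * {set 'I_r.+1})%type.
Definition unt (t : l.-tuple ('I_r.+1 * 'I_r.+1)) : seq (nat * nat) :=
  map (fun p => (val p.1, val p.2)) (tval t).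
Definition key (w : seq nat) : K :=
  ([set t | asb (npset w l (unt t))], [set i : 'I_r.+1 | nat_of_ord i \in w]).
Definition bnd (w : seq nat) := all (fun v => v <= r)%N w.

Lemma gmin_bnd s : all (fun v => v <= r)%N s -> (gmin 0%N s <= r)%N.
Proof.
case: (eqVneq s [::]) => [->//|ne] /allP H.
exact: H (gmin_mem 0%N ne).
Qed.
Lemma gmax_bnd s : all (fun v => v <= r)%N s -> (gmax 0%N s <= r)%N.
Proof.
case: (eqVneq s [::]) => [->//|ne] /allP H.
exact: H (gmax_mem 0%N ne).
Qed.

Lemma nsec_bnd w M j : bnd w -> all (fun v => v <= r)%N (nsec w M j).
Proof.
move=> /allP b; apply/allP => z /nsecP[p _ /andP[_ /eqP ->]].
case: (ltnP p.1 (size w)) => h; first by apply: b; rewrite mem_nth.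
by rewrite nth_default.
Qed.

Lemma unt_surj w M : bnd w -> exists t, unt t = nprof w l M.
Proof.
move=> b; set P := nprof w l M.
set tt := map (fun p : nat * nat => ((inord p.1 : 'I_r.+1), (inord p.2 : 'I_r.+1))) P.
have sz : size tt == l by rewrite /tt /P /nprof !size_map size_iota.
exists (Tuple sz); rewrite /unt /= /tt -map_comp -[RHS]map_id.
apply/eq_in_map => p /mapP[j _ ->] /=.
by rewrite !inordK // ltnS ?gmin_bnd ?gmax_bnd // nsec_bnd.
Qed.

Lemma key_npset w1 w2 : bnd w1 -> bnd w2 -> key w1 = key w2 ->
  forall P, npset w1 l P -> npset w2 l P.
Proof.
move=> b1 b2 [E _] P H; have [M [_ PE]] := H.
have [t tE] := unt_surj M b1.
have : t \in [set t | asb (npset w1 l (unt t))] by rewrite inE; apply/asbP; rewrite tE -PE.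
by rewrite E inE => /asbP; rewrite tE -PE.
Qed.

Lemma key_mem w1 w2 : bnd w1 -> bnd w2 -> key w1 = key w2 ->
  forall v, v \in w1 -> v \in w2.
Proof.
move=> /allP b1 b2 [_ E] v vin.
have : (inord v : 'I_r.+1) \in [set i : 'I_r.+1 | nat_of_ord i \in w1].
  by rewrite inE inordK // ltnS b1.
by rewrite E inE inordK // ltnS b1.
Qed.

Definition good (k : K) n := exists w, [/\ size w = n, bnd w & key w = k].

Lemma bound_exists : exists N, forall k : K, (exists n, good k n) ->
  exists n, (n <= N)%N /\ good k n.
Proof.
suff H : forall s : seq K, exists N, forall k, k \in s -> (exists n, good k n) ->
    exists n, (n <= N)%N /\ good k n.
  have [N HN] := H (enum {: K}); exists N => k; apply: HN; by rewrite mem_enum.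
elim => [|k s [N IH]]; first by exists 0%N.
case: (classic (exists n, good k n)) => [[n0 g0]|ng].
  exists (maxn n0 N) => k'; rewrite inE => /orP[/eqP->|kin] ex.
    by exists n0; rewrite leq_maxl.
  have [n [nN g]] := IH k' kin ex; exists n; split => //.
  exact: leq_trans nN (leq_maxr _ _).
exists N => k'; rewrite inE => /orP[/eqP->|kin] ex //.
exact: IH.
Qed.
End Fin.

Definition pad (w : seq nat) t := nseq t (head 0%N w) ++ w.

Lemma pad_npset w l t : (0 < size w)%N -> (0 < l)%N ->
  forall P, npset (pad w t) l P <-> npset w l P.
Proof.
move=> w0 l0; elim: t => [//|t IH] P.
have -> : pad w t.+1 = head 0%N (pad w t) :: pad w t.
  by rewrite /pad /=; case: t {IH} => //=; case: (w) w0.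
rewrite npset_dup //; last by rewrite size_cat (leq_trans w0) ?leq_addl.
Qed.

Lemma pad_mem w t : (0 < size w)%N -> pad w t =i w.
Proof.
case: w => // a w _ v; rewrite /pad mem_cat mem_nseq /= inE.
by case: (v == a); rewrite ?andbF ?andbT ?orbT.
Qed.

End Part6.

Section Part7.
Local Open Scope ring_scope.

Lemma main_N (r l : nat) : exists N : nat,
    forall (m : nat) (x : m.-tuple R),
      (0 < m)%N -> (0 < l)%N -> (size (tset x) <= r)%N ->
      exists y : N.-tuple R,
        (forall P, profiles y l P <-> profiles x l P) /\
        (tset x =i tset y) /\
        (forall (q : l.-tuple R) (d : R), is_dF x q d <-> is_dF y q d).
Proof.
have [N HN] := bound_exists r l; exists N => m x m0 l0 xr.
set w := map (rank x) x.
have xin z : z \in x -> z \in tset x by rewrite /tset mem_undup.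
have bw : bnd r w.
  apply/allP => k /mapP[z zx ->]; have /andP[_ h] := rank_bound (xin _ zx).
  exact: leq_trans h xr.
have sx : size x = m by rewrite size_tuple.
have [n [nN [w0 [sw0 bw0 kw0]]]] := HN (key r l w) (ex_intro _ (size w) (ex_intro _ w (And3 erefl bw erefl))).
have w0w : w0 =i w.
  move=> v; apply/idP/idP; [apply: (@key_mem r l w0 w) | apply: (@key_mem r l w w0)] => //.
have w00 : (0 < size w0)%N.
  have : head 0%N w \in w0 by rewrite w0w; rewrite /w; case: (tval x) sx m0 => [<-//|a s] _ _; rewrite mem_head.
  by case: (w0).
set w' := pad w0 (N - n).
have sw' : size w' = N by rewrite /w' /pad size_cat size_nseq sw0 subnK.
have w'w : w' =i w by move=> v; rewrite pad_mem // w0w.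
set g := fun k : nat => nth 0 (sortt x) k.-1.
set ys := map g w'.
have sy : size ys == N by rewrite size_map sw'.
exists (Tuple sy).
have winv k : k \in w -> exists2 z, z \in tset x & k = rank x z.
  by move=> /mapP[z zx ->]; exists z => //; apply: xin.
have ex : tset x =i tset (Tuple sy).
  move=> z; rewrite /tset /= !mem_undup; apply/idP/idP => [zin|/mapP[k kin ->]].
    apply/mapP; exists (rank x z); last by rewrite /g rank_inv ?xin.
    by rewrite w'w; apply: map_f.
  rewrite w'w in kin; have [z' zin ->] := winv k kin.
  by rewrite /g rank_inv //; move: zin; rewrite /tset mem_undup.
have cy : map (rank (Tuple sy)) (Tuple sy) = w'.
  rewrite /= -map_comp -[RHS]map_id; apply/eq_in_map => k kin /=.
  rewrite w'w in kin; have [z zin ->] := winv k kin.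
  by rewrite -(rank_eq ex) /g rank_inv.
have y0 : (0 < size (Tuple sy))%N by rewrite /= size_map sw' (leq_trans w00) // sw0.
have x0 : (0 < size x)%N by rewrite sx.
have HP : forall P, profiles (Tuple sy) l P <-> profiles x l P.
  move=> P; rewrite (profiles_code P y0 l0) (profiles_code P x0 l0) cy.
  rewrite pad_npset //; split; [apply: (@key_npset r l w0 w) | apply: (@key_npset r l w w0)] => //.
split => //; split => // q d.
have ql : size q = l by rewrite size_tuple.
split; first by apply: (dF_transfer (l:=l)).
apply: (dF_transfer (l:=l)) => //.
by move=> P; rewrite HP.
Qed.

End Part7.

Local Open Scope ring_scope.

Theorem lemma4p6 :
  exists f : nat -> nat -> nat,
    forall (m r : nat) (x : m.-tuple R) (l : nat),
      (0 < m)%N -> (0 < l)%N -> (size (tset x) <= r)%N ->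
      exists y : (f r l).-tuple R,
        (forall P, profiles y l P <-> profiles x l P) /\
        (tset x =i tset y) /\
        (forall (q : l.-tuple R) (d : R), is_dF x q d <-> is_dF y q d).
Proof.
exists (fun r l => proj1_sig (constructive_indefinite_description _ (main_N r l))).
move=> m r x l.
exact: (proj2_sig (constructive_indefinite_description _ (main_N r l)) m x).
Qed.
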